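(* If $\mathcal{S}\in\mathscr{W}$ is $C^4$-smooth and has isolated umbilic points at its poles, then the umbilic slopes $\mu_0,\mu_\pi$ of $\mathcal{S}$ are greater than or equal to $3$.
   Context: $\mathscr{W}$ is the set of embedded $C^2$-smooth topological 2-spheres in $\mathbb{R}^3$ that are rotationally symmetric and strictly convex. A surface in $\mathscr{W}$ is parametrised by the inverse Gauss map with $\theta\in[0,\pi]$ the angle between the outward normal and the symmetry axis ($\theta=0,\pi$ are the poles). With support function $r(\theta)=\vec X\cdot\hat n$, the radii of curvature are $r_1=\frac{\cos^2\theta}{\sin\theta}\frac{d}{d\theta}\left(\frac{r}{\cos\theta}\right)$, $r_2=r''+r$, and the astigmatism is $s=r_2-r_1$; umbilic points are where $s=0$. The umbilic slopes are $\mu_0=\lim_{\theta\to0}\frac{r_2(\theta)-r_2(0)}{r_1(\theta)-r_1(0)}$ and $\mu_\pi=\lim_{\theta\to\pi}\frac{r_2(\theta)-r_2(\pi)}{r_1(\theta)-r_1(\pi)}$. *)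

(* Defs.v *)
From Stdlib Require Import Reals.
From Coquelicot Require Import Coquelicot.
Open Scope R_scope.

(* A rotationally symmetric surface is described by its support function
   r(theta), theta = angle between outward normal and the symmetry axis.
   Smoothness of the surface at the poles means that r extends evenly
   across theta = 0 and theta = pi; we take r : R -> R with these
   reflection symmetries. *)

Definition Ck (k : nat) (r : R -> R) : Prop :=
  (forall n : nat, (n <= k)%nat -> forall x : R, ex_derive_n r n x) /\
  (forall x : R, continuous (Derive_n r k) x).

Definition pole_symmetric (r : R -> R) : Prop :=
  (forall t, r (- t) = r t) /\ (forall t, r (PI - t) = r (PI + t)).

(* r1 = cos^2 t / sin t * d/dt (r / cos) = r + r' cos t / sin t,
   with its (continuous-extension) value r + r'' at the poles. *)
Definition radius1 (r : R -> R) (t : R) : R :=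
  if Req_EM_T (sin t) 0 then r t + Derive_n r 2 t
  else r t + Derive r t * cos t / sin t.

Definition radius2 (r : R -> R) (t : R) : R := Derive_n r 2 t + r t.

Definition astig (r : R -> R) (t : R) : R := radius2 r t - radius1 r t.

Definition strictly_convex (r : R -> R) : Prop :=
  forall t, 0 <= t <= PI -> 0 < radius1 r t /\ 0 < radius2 r t.

Definition slope_ratio (r : R -> R) (p t : R) : R :=
  (radius2 r t - radius2 r p) / (radius1 r t - radius1 r p).

Definition umbilic_slope0 (r : R -> R) (mu : R) : Prop :=
  at_right 0 (fun t => radius1 r t <> radius1 r 0) /\
  filterlim (slope_ratio r 0) (at_right 0) (locally mu).

Definition umbilic_slopePI (r : R -> R) (mu : R) : Prop :=
  at_left PI (fun t => radius1 r t <> radius1 r PI) /\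
  filterlim (slope_ratio r PI) (at_left PI) (locally mu).

(* Main.v *)
Require Import Defs.
From Stdlib Require Import Reals Lra Lia.
From Coquelicot Require Import Coquelicot.
Open Scope R_scope.

Lemma ballR x (e:R) y : ball x e y <-> Rabs (y - x) < e.
Proof. split; intros H; exact H. Qed.

Lemma is_derive_cont (f : R -> R) (c d : R) : is_derive f c d -> continuity_pt f c.
Proof. intros H. apply continuity_pt_filterlim. apply (ex_derive_continuous (K:=R_AbsRing) (V:=R_NormedModule)). exists d; exact H. Qed.

Lemma mvt_abs (h h' : R -> R) a b A : a <= b ->
  (forall c, a <= c <= b -> is_derive h c (h' c)) ->
  (forall c, a <= c <= b -> Rabs (h' c) <= A) ->
  Rabs (h b - h a) <= A * (b - a).
Proof.
  intros Hab Hd Hb.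
  destruct (MVT_gen h a b h') as [c [Hc Heq]].
  - intros x Hx. rewrite Rmin_left in Hx by lra. rewrite Rmax_right in Hx by lra. apply Hd; lra.
  - intros x Hx. rewrite Rmin_left in Hx by lra. rewrite Rmax_right in Hx by lra.
    eapply is_derive_cont; apply Hd; lra.
  - rewrite Rmin_left in Hc by lra. rewrite Rmax_right in Hc by lra.
    rewrite Heq, Rabs_mult, (Rabs_pos_eq (b - a)) by lra.
    apply Rmult_le_compat_r; [lra| apply Hb; lra].
Qed.

Lemma mvt_nonincr (h h' : R -> R) a b : a <= b ->
  (forall c, a <= c <= b -> is_derive h c (h' c)) ->
  (forall c, a <= c <= b -> h' c <= 0) -> h b <= h a.
Proof.
  intros Hab Hd Hb.
  destruct (MVT_gen h a b h') as [c [Hc Heq]].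
  - intros x Hx. rewrite Rmin_left in Hx by lra. rewrite Rmax_right in Hx by lra. apply Hd; lra.
  - intros x Hx. rewrite Rmin_left in Hx by lra. rewrite Rmax_right in Hx by lra.
    eapply is_derive_cont; apply Hd; lra.
  - rewrite Rmin_left in Hc by lra. rewrite Rmax_right in Hc by lra.
    assert (h' c <= 0) by (apply Hb; lra). nra.
Qed.

Lemma sin_half x : 0 <= x <= 1 -> x/2 <= sin x.
Proof. intros Hx. pose proof (pre_sin_bound x 0 ltac:(lra) ltac:(lra)) as [H _].
unfold sin_approx, sin_term in H. simpl in H. nra. Qed.

Lemma xcos_sin x : 0 <= x <= 1 -> Rabs (x * cos x - sin x) <= x^3.
Proof.
  intros Hx.
  pose proof (mvt_abs (fun y => y * cos y - sin y) (fun y => - (y * sin y)) 0 x (x^2) ltac:(lra)) as H.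
  cbv beta in H. rewrite sin_0, cos_0 in H.
  replace (x * cos x - sin x) with (x * cos x - sin x - (0 * 1 - 0)) by ring.
  replace (x^3) with (x^2 * (x - 0)) by ring.
  apply H.
  - intros c Hc. auto_derive; [exact I| ring].
  - intros c Hc. rewrite Rabs_Ropp.
    assert (0 <= sin c) by (apply sin_ge_0; pose proof PI2_1; lra).
    assert (sin c <= c).
    { destruct (Req_dec c 0) as [->|]; [rewrite sin_0; lra| apply Rlt_le, sin_lt_x; lra]. }
    rewrite Rabs_pos_eq by nra. nra.
Qed.

Lemma ln_sq_derive F c d : is_derive F c d -> F c <> 0 ->
  is_derive (fun y => ln (F y * F y)) c (2 * d / F c).
Proof.
  intros H H0. auto_derive.
  - split; [exists d; exact H|]. split; [exists d; exact H|]. split; [|exact I].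
    destruct (Rdichotomy _ _ H0); nra.
  - replace (Derive (fun x => F x) c) with d by (symmetry; apply is_derive_unique; exact H).
    field; exact H0.
Qed.

Lemma even_deriv r n x : Ck 4 r -> (forall t, r (-t) = r t) -> (n <= 4)%nat ->
  Derive_n r n x = (-1)^n * Derive_n r n (-x).
Proof.
  intros C E Hn. rewrite <- Derive_n_comp_opp.
  - apply Derive_n_ext. intros; symmetry; apply E.
  - apply filter_forall. intros y k Hk. apply (proj1 C). lia.
Qed.

Lemma deriv_r1 r c : Ck 4 r -> sin c <> 0 ->
  is_derive (radius1 r) c (cos c / sin c * (radius2 r c - radius1 r c)).
Proof.
  intros C Hs.
  assert (Hloc : locally c (fun y => sin y <> 0)).
  { assert (Hc := proj1 (continuity_pt_filterlim sin c) (continuity_sin c)).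
    assert (Hp : 0 < Rabs (sin c)) by (apply Rabs_pos_lt; auto).
    specialize (Hc _ (locally_ball (sin c) (mkposreal _ Hp))).
    eapply filter_imp; [|exact Hc]. intros y Hy. apply ballR in Hy. simpl in Hy.
    intro E. rewrite E in Hy. change (Rabs (0 - sin c) < Rabs (sin c)) in Hy. replace (0 - sin c) with (- sin c) in Hy by ring. rewrite Rabs_Ropp in Hy. lra. }
  apply (is_derive_ext_loc (fun y => r y + Derive r y * cos y / sin y)).
  { eapply filter_imp; [|exact Hloc]. intros y Hy. unfold radius1.
    destruct Req_EM_T; [contradiction|reflexivity]. }
  auto_derive.
  { split. exact (proj1 C 1%nat ltac:(lia) c). split. exact (proj1 C 2%nat ltac:(lia) c). auto. }
  unfold radius1, radius2. destruct Req_EM_T; [contradiction|].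
  change (Derive (fun x => r x) c) with (Derive r c).
  change (Derive_n r 2 c) with (Derive (fun x => Derive r x) c).
  field. exact Hs.
Qed.

Lemma side0 r : Ck 4 r -> (forall t, r (-t) = r t) ->
  forall mu, umbilic_slope0 r mu -> 3 <= mu.
Proof.
  intros C E mu [U1 U2].
  destruct (Rle_lt_dec 3 mu) as [|Hmu]; [assumption|exfalso].
  set (D := Derive_n r).
  assert (Dd : forall k x, (k <= 3)%nat -> is_derive (D k) x (D (S k) x)).
  { intros k x Hk. apply Derive_correct. exact ((proj1 C) (S k) ltac:(lia) x). }
  assert (D1_0 : D 1%nat 0 = 0).
  { pose proof (even_deriv r 1 0 C E ltac:(lia)) as H. rewrite Ropp_0 in H.
    replace ((-1)^1) with (-1) in H by ring. unfold D. lra. }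
  assert (D3_0 : D 3%nat 0 = 0).
  { pose proof (even_deriv r 3 0 C E ltac:(lia)) as H. rewrite Ropp_0 in H.
    replace ((-1)^3) with (-1) in H by ring. unfold D. lra. }
  set (b := D 2%nat 0).
  destruct (continuity_ab_maj (fun x => Rabs (D 4%nat x)) 0 1) as [Mx [HM _]]; [lra| |].
  { intros c _. apply (continuity_pt_comp (D 4%nat) Rabs).
    - apply continuity_pt_filterlim. apply (proj2 C).
    - apply Rcontinuity_abs. }
  set (M4 := Rabs (D 4%nat Mx)).
  assert (M4pos : 0 <= M4) by apply Rabs_pos.
  assert (HM' : forall c, 0 <= c <= 1 -> Rabs (D 4%nat c) <= M4) by (intros c Hc; exact (HM c Hc)).
  assert (B3 : forall x, 0 <= x <= 1 -> Rabs (D 3%nat x) <= M4 * x).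
  { intros x Hx. pose proof (mvt_abs (D 3%nat) (D 4%nat) 0 x M4 ltac:(lra)) as H.
    rewrite D3_0, !Rminus_0_r in H. apply H.
    - intros; apply Dd; lia.
    - intros; apply HM'; lra. }
  assert (B2 : forall x, 0 <= x <= 1 -> Rabs (D 2%nat x - b) <= M4 * x^2).
  { intros x Hx. pose proof (mvt_abs (D 2%nat) (D 3%nat) 0 x (M4 * x) ltac:(lra)) as H.
    replace (M4 * x^2) with (M4 * x * (x - 0)) by ring. apply H.
    - intros; apply Dd; lia.
    - intros c Hc. eapply Rle_trans; [apply B3; lra|]. apply Rmult_le_compat_l; lra. }
  assert (B1 : forall x, 0 <= x <= 1 -> Rabs (D 1%nat x - b * x) <= M4 * x^3).
  { intros x Hx.
    pose proof (mvt_abs (fun y => D 1%nat y - b * y) (fun y => D 2%nat y - b) 0 x (M4 * x^2) ltac:(lra)) as H.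
    cbv beta in H. rewrite D1_0 in H.
    replace (D 1%nat x - b * x) with (D 1%nat x - b * x - (0 - b * 0)) by ring.
    replace (M4 * x^3) with (M4 * x^2 * (x - 0)) by ring. apply H.
    - intros c Hc. apply (is_derive_minus (D 1%nat) (fun y => b * y)).
      + apply Dd; lia.
      + auto_derive; [exact I| ring].
    - intros c Hc. eapply Rle_trans; [apply B2; lra|]. apply Rmult_le_compat_l; [lra|]. nra. }
  assert (B0 : forall x, 0 <= x <= 1 -> Rabs (r x - r 0) <= (M4 + Rabs b) * x^2).
  { intros x Hx. pose proof (mvt_abs r (D 1%nat) 0 x ((M4 + Rabs b) * x) ltac:(lra)) as H.
    replace ((M4 + Rabs b) * x^2) with ((M4 + Rabs b) * x * (x - 0)) by ring. apply H.
    - intros c Hc. exact (Dd 0%nat c ltac:(lia)).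
    - intros c Hc.
      assert (T : Rabs (D 1%nat c) <= Rabs (D 1%nat c - b*c) + Rabs (b*c)).
      { replace (D 1%nat c) with ((D 1%nat c - b*c) + b*c) at 1 by ring. apply Rabs_triang. }
      rewrite Rabs_mult, (Rabs_pos_eq c) in T by lra.
      pose proof (B1 c ltac:(lra)). pose proof (Rabs_pos b).
      assert (c3 : c^3 <= x) by (simpl; nra).
      assert (M4 * c^3 <= M4 * x) by (apply Rmult_le_compat_l; lra).
      assert (Rabs b * c <= Rabs b * x) by (apply Rmult_le_compat_l; lra). nra. }
  assert (R10 : radius1 r 0 = r 0 + b).
  { unfold radius1. destruct (Req_EM_T (sin 0) 0) as [_|n]; [reflexivity|rewrite sin_0 in n; lra]. }
  assert (R1x : forall x, sin x <> 0 -> radius1 r x = r x + D 1%nat x * cos x / sin x).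
  { intros x Hx. unfold radius1. destruct Req_EM_T; [contradiction|reflexivity]. }
  set (K := 3 * (M4 + Rabs b) + 1).
  assert (Kpos : 0 < K) by (pose proof (Rabs_pos b); unfold K; lra).
  assert (Fb : forall x, 0 < x <= 1 -> Rabs (radius1 r x - radius1 r 0) <= K * x^2).
  { intros x Hx. pose proof (sin_half x ltac:(lra)) as sx.
    rewrite R10, R1x by lra.
    replace (r x + D 1%nat x * cos x / sin x - (r 0 + b)) with
      ((r x - r 0) + ((D 1%nat x - b * x) * cos x + b * (x * cos x - sin x)) / sin x) by (field; lra).
    eapply Rle_trans; [apply Rabs_triang|].
    assert (HA : Rabs ((D 1%nat x - b * x) * cos x + b * (x * cos x - sin x)) <= (M4 + Rabs b) * x^3).
    { eapply Rle_trans; [apply Rabs_triang|]. rewrite !Rabs_mult.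
      pose proof (B1 x ltac:(lra)). pose proof (xcos_sin x ltac:(lra)).
      assert (Rabs (cos x) <= 1) by (apply Rabs_le; apply COS_bound).
      pose proof (Rabs_pos (cos x)). pose proof (Rabs_pos b).
      pose proof (Rabs_pos (D 1%nat x - b * x)). nra. }
    assert (HB : Rabs (((D 1%nat x - b * x) * cos x + b * (x * cos x - sin x)) / sin x)
                 <= 2 * (M4 + Rabs b) * x^2).
    { unfold Rdiv. rewrite Rabs_mult, Rabs_inv, (Rabs_pos_eq (sin x)) by lra.
      apply (Rmult_le_reg_r (sin x)); [lra|]. rewrite Rmult_assoc, Rinv_l, Rmult_1_r by lra.
      pose proof (Rabs_pos b). eapply Rle_trans; [exact HA|].
      replace ((M4 + Rabs b) * x^3) with ((M4 + Rabs b) * x^2 * x) by ring.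
      replace (2 * (M4 + Rabs b) * x ^ 2 * sin x) with ((M4 + Rabs b) * x^2 * (2 * sin x)) by ring.
      apply Rmult_le_compat_l; [|lra]. apply Rmult_le_pos; [lra| apply pow2_ge_0]. }
    pose proof (B0 x ltac:(lra)). unfold K. nra. }
  set (m := Rmax ((mu + 3)/2) 2).
  assert (m3 : m < 3) by (apply Rmax_lub_lt; lra).
  assert (mmu : mu < m) by (eapply Rlt_le_trans; [|apply Rmax_l]; lra).
  assert (m2 : 2 <= m) by apply Rmax_r.
  assert (Hp : 0 < m - mu) by lra.
  pose proof (U2 _ (locally_ball mu (mkposreal _ Hp))) as U3.
  destruct U1 as [e1 He1]. destruct U3 as [e3 He3].
  set (dl := Rmin 1 (Rmin e1 e3)).
  assert (dl1 : dl <= 1) by apply Rmin_l.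
  assert (dle1 : dl <= e1) by (unfold dl; eapply Rle_trans; [apply Rmin_r|apply Rmin_l]).
  assert (dle3 : dl <= e3) by (unfold dl; eapply Rle_trans; [apply Rmin_r|apply Rmin_r]).
  assert (dlpos : 0 < dl).
  { unfold dl. apply Rmin_pos; [lra|]. apply Rmin_pos; apply cond_pos. }
  assert (Hball : forall (e : posreal) y, 0 < y < e -> ball 0 e y).
  { intros e y Hy. apply ballR. rewrite Rminus_0_r, Rabs_pos_eq; lra. }
  assert (Hf : forall t, 0 < t < dl -> radius1 r t - radius1 r 0 <> 0).
  { intros t Ht Z. apply (He1 t); [apply Hball; lra| lra| lra]. }
  assert (Hs : forall t, 0 < t < dl -> slope_ratio r 0 t < m).
  { intros t Ht. pose proof (He3 t (Hball e3 t ltac:(lra)) ltac:(lra)) as X.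
    change (Rabs (slope_ratio r 0 t - mu) < m - mu) in X.
    pose proof (Rle_abs (slope_ratio r 0 t - mu)). lra. }
  assert (Hsin : forall t, 0 < t <= 1 -> 0 < sin t).
  { intros t Ht. pose proof (sin_half t ltac:(lra)). lra. }
  assert (Hcos : forall t, 0 < t <= 1 -> 0 < cos t).
  { intros t Ht. pose proof PI2_1. apply cos_gt_0; lra. }
  assert (R20 : radius2 r 0 = radius1 r 0).
  { rewrite R10. unfold radius2. unfold b, D. ring. }
  set (H := fun y => ln ((radius1 r y - radius1 r 0) * (radius1 r y - radius1 r 0))
                     - 2 * (m - 1) * ln (sin y)).
  set (t0 := dl / 2).
  assert (Hmono : forall t, 0 < t <= t0 -> H t0 <= H t).
  { intros t Ht.
    apply (mvt_nonincr H (fun y => 2 * (cos y / sin y) * (slope_ratio r 0 y - m)) t t0); [lra| |].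
    - intros c Hc. assert (sc : 0 < sin c) by (apply Hsin; unfold t0 in *; lra).
      assert (fc : radius1 r c - radius1 r 0 <> 0) by (apply Hf; unfold t0 in *; lra).
      assert (dr : is_derive (radius1 r) c (cos c / sin c * (radius2 r c - radius1 r c)))
        by (apply deriv_r1; [exact C| lra]).
      unfold H. auto_derive.
      + repeat split; try exact sc;
          try (exists (cos c / sin c * (radius2 r c - radius1 r c)); exact dr).
        replace (radius1 r c + - radius1 r 0) with (radius1 r c - radius1 r 0) by ring.
        destruct (Rdichotomy _ _ fc); nra.
      + replace (Derive (fun x => radius1 r x) c) with (cos c / sin c * (radius2 r c - radius1 r c))
          by (symmetry; apply is_derive_unique; exact dr).
        unfold slope_ratio. rewrite R20. field. split; lra.
    - intros c Hc. assert (sc : 0 < sin c) by (apply Hsin; unfold t0 in *; lra).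
      assert (cc : 0 < cos c) by (apply Hcos; unfold t0 in *; lra).
      assert (q : slope_ratio r 0 c < m) by (apply Hs; unfold t0 in *; lra).
      assert (0 < cos c / sin c) by (apply Rdiv_lt_0_compat; lra). nra. }
  set (C0 := H t0 - 2 * ln K + 2 * (m - 1) * ln (/2)).
  set (L := Rmin (ln t0) (C0 / (6 - 2*m)) - 1).
  set (t := exp L).
  assert (t0pos : 0 < t0) by (unfold t0; lra).
  assert (tpos : 0 < t) by apply exp_pos.
  assert (tle : t <= t0).
  { unfold t. rewrite <- (exp_ln t0) by lra. apply Rlt_le, exp_increasing.
    unfold L. pose proof (Rmin_l (ln t0) (C0 / (6 - 2*m))). lra. }
  assert (lnt : ln t = L) by apply ln_exp.
  pose proof (Hmono t (conj tpos tle)) as HH. unfold H at 2 in HH. cbv beta in HH.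
  set (f := radius1 r t - radius1 r 0) in HH.
  assert (fnz : f <> 0) by (apply Hf; unfold t0 in *; lra).
  assert (fpos : 0 < f * f) by (destruct (Rdichotomy _ _ fnz); nra).
  pose proof (Fb t ltac:(unfold t0 in *; lra)) as Fbt. fold f in Fbt.
  assert (A0 : f * f <= (K*t*t)*(K*t*t)).
  { pose proof (Rabs_pos f).
    replace (f*f) with (Rabs f * Rabs f) by (rewrite <- Rabs_mult; apply Rabs_pos_eq; lra).
    simpl in Fbt. apply Rmult_le_compat; lra. }
  assert (A1 : ln (f * f) <= 2 * ln K + 4 * L).
  { eapply Rle_trans; [apply ln_le; [exact fpos| exact A0]|].
    rewrite !ln_mult by (try apply Rmult_lt_0_compat; try apply Rmult_lt_0_compat; lra).
    rewrite lnt. lra. }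
  assert (A2 : L + ln (/2) <= ln (sin t)).
  { rewrite <- lnt, <- ln_mult by lra. apply ln_le; [lra|].
    pose proof (sin_half t ltac:(unfold t0 in *; lra)). lra. }
  assert (A3 : 2 * (m - 1) * (L + ln (/2)) <= 2 * (m - 1) * ln (sin t))
    by (apply Rmult_le_compat_l; lra).
  assert (A4 : C0 <= (6 - 2 * m) * L) by (unfold C0; lra).
  assert (A5 : L < C0 / (6 - 2 * m)).
  { unfold L. pose proof (Rmin_r (ln t0) (C0 / (6 - 2*m))). lra. }
  apply (Rmult_lt_compat_l (6 - 2 * m)) in A5; [|lra].
  replace ((6 - 2 * m) * (C0 / (6 - 2 * m))) with C0 in A5 by (field; lra).
  lra.
Qed.

Lemma left_to_right (P : R -> Prop) : at_left PI P -> at_right 0 (fun t => P (PI - t)).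
Proof.
  intros [e He]. exists e. intros y Hy Hy0. apply He.
  - apply ballR. apply ballR in Hy. change (Rabs (y - 0) < e) in Hy.
    replace (PI - y - PI) with (-(y - 0)) by ring. rewrite Rabs_Ropp. exact Hy.
  - lra.
Qed.

Lemma sidePI r : Ck 4 r -> pole_symmetric r ->
  forall mu, umbilic_slopePI r mu -> 3 <= mu.
Proof.
  intros C [E1 E2] mu [U1 U2].
  set (g := fun z => r (z + PI)).
  set (rt := fun y => g (- y)).
  assert (Hex : forall k y, (k <= 4)%nat -> ex_derive_n g k y).
  { intros k y Hk. apply ex_derive_n_comp_trans. apply (proj1 C); lia. }
  assert (HD : forall n x, (n <= 4)%nat -> Derive_n rt n x = (-1)^n * Derive_n r n (PI - x)).
  { intros n x Hn. unfold rt. rewrite Derive_n_comp_opp.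
    - unfold g. rewrite Derive_n_comp_trans. replace (- x + PI) with (PI - x) by ring. reflexivity.
    - apply filter_forall. intros y k Hk. apply Hex. lia. }
  assert (Crt : Ck 4 rt).
  { split.
    - intros n Hn x. unfold rt. apply ex_derive_n_comp_opp. apply filter_forall.
      intros y k Hk. apply Hex. lia.
    - intros x. apply (continuous_ext (fun y => Derive_n r 4 (PI - y))).
      { intros y. assert (Z := HD 4%nat y ltac:(lia)). replace ((-1)^4) with 1 in Z by ring. rewrite Rmult_1_l in Z. rewrite Z. reflexivity. }
      apply (continuous_comp (fun y => PI - y) (Derive_n r 4)).
      + apply (ex_derive_continuous (K:=R_AbsRing) (V:=R_NormedModule)). auto_derive. exact I.
      + apply (proj2 C). }
  assert (Ert : forall t, rt (-t) = rt t).
  { intros t. unfold rt, g. replace (- - t + PI) with (PI + t) by ring.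
    replace (- t + PI) with (PI - t) by ring. symmetry. apply E2. }
  assert (rtv : forall t, rt t = r (PI - t)).
  { intros t. unfold rt, g. f_equal. ring. }
  assert (R1rel : forall t, radius1 rt t = radius1 r (PI - t)).
  { intros t. unfold radius1.
    change (Derive rt t) with (Derive_n rt 1 t).
    change (Derive r (PI - t)) with (Derive_n r 1 (PI - t)).
    rewrite !HD by lia. rewrite rtv, sin_PI_x, Rtrigo_facts.cos_pi_minus.
    destruct (Req_EM_T (sin t) 0); [ring| field; exact n]. }
  assert (R2rel : forall t, radius2 rt t = radius2 r (PI - t)).
  { intros t. unfold radius2. rewrite HD by lia. rewrite rtv. ring. }
  apply (side0 rt Crt Ert). split.
  - eapply filter_imp; [|apply left_to_right; exact U1].
    intros t Ht. cbv beta in Ht. rewrite !R1rel, Rminus_0_r. exact Ht.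
  - apply (filterlim_ext (fun t => slope_ratio r PI (PI - t))).
    { intros t. unfold slope_ratio. rewrite !R1rel, !R2rel, Rminus_0_r. reflexivity. }
    apply (filterlim_comp _ _ _ (fun t => PI - t) (slope_ratio r PI) _ (at_left PI)).
    + intros P HP. apply left_to_right. exact HP.
    + exact U2.
Qed.

Theorem proposition2p4 (r : R -> R) :
  Ck 4 r ->
  pole_symmetric r ->
  strictly_convex r ->
  (* isolated umbilic points at the poles *)
  (exists eps, 0 < eps /\ forall t, 0 < t < eps -> astig r t <> 0) ->
  (exists eps, 0 < eps /\ forall t, PI - eps < t < PI -> astig r t <> 0) ->
  (forall mu0, umbilic_slope0 r mu0 -> 3 <= mu0) /\
  (forall mupi, umbilic_slopePI r mupi -> 3 <= mupi).
Proof.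
  intros C P _ _ _. split.
  - apply side0; [exact C|]. intros t. apply (proj1 P).
  - apply sidePI; assumption.
Qed.
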